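(* Let $V$ be a real sequence and suppose $(-\Delta+V)\psi=0$ has two linearly independent positive solutions $\psi^+,\psi^-$ on $m\le n\le N$, with $N\ge m+2$, normalized so that $\psi^-_n\psi^+_{n+1}-\psi^-_{n+1}\psi^+_n=1$, and let $G_{jk}=\psi^+_{\min(j,k)}\psi^-_{\max(j,k)}$ be the associated Green matrix. Define $z_n:=\sqrt{G_{nn}}$ for $m\le n\le N$, $$S^{[z]}_n:=\frac{1+\sqrt{1+4z_n^2z_{n-1}^2}}{2z_nz_{n-1}}\quad(m<n\le N),\qquad \varphi^\pm_n:=z_n\prod_{k=m+1}^n\big(S^{[z]}_k\big)^{\pm1}.$$ Then: (1) $\varphi^+,\varphi^-$ are an independent pair of solutions of $(-\Delta+V)\varphi=0$ at all interior points $m<n<N$; (2) $G_{nk}=z_nz_k\prod_{\ell=k+1}^n\frac{1}{S^{[z]}_\ell}$ for $m<k<n\le N$; (3) for $m<n<N$, $\frac12\left(\sqrt{1+4G_{nn}G_{n+1\,n+1}}+\sqrt{1+4G_{nn}G_{n-1\,n-1}}\right)=(2+V_n)G_{nn}$.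
   Context: $(\Delta f)_n=f_{n+1}+f_{n-1}-2f_n$; $(-\Delta+V)\psi=0$ at $n$ means $-\psi_{n+1}-\psi_{n-1}+(2+V_n)\psi_n=0$. *)

(* Defs.v *)
From Stdlib Require Import Reals ZArith.
Open Scope R_scope.

(* (-Δ + V) f evaluated at n:  -f_{n+1} - f_{n-1} + (2 + V_n) f_n *)
Definition schr (V f : Z -> R) (n : Z) : R :=
  - f (n + 1)%Z - f (n - 1)%Z + (2 + V n) * f n.

Fixpoint prod_nat (g : nat -> R) (n : nat) : R :=
  match n with
  | O => 1
  | S p => prod_nat g p * g p
  end.

(* prodZ f a b = \prod_{k = a+1}^{b} f k  (empty product = 1 when b <= a) *)
Definition prodZ (f : Z -> R) (a b : Z) : R :=
  prod_nat (fun i => f (a + 1 + Z.of_nat i)%Z) (Z.to_nat (b - a)).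

Definition lin_indep_on (m N : Z) (f g : Z -> R) : Prop :=
  forall a b : R, (forall n, (m <= n <= N)%Z -> a * f n + b * g n = 0) ->
    a = 0 /\ b = 0.

Definition green (pp pm : Z -> R) (j k : Z) : R := pp (Z.min j k) * pm (Z.max j k).

Definition zseq (pp pm : Z -> R) (n : Z) : R := sqrt (green pp pm n n).

Definition Sz (z : Z -> R) (n : Z) : R :=
  (1 + sqrt (1 + 4 * (z n)^2 * (z (n - 1)%Z)^2)) / (2 * z n * z (n - 1)%Z).

Definition phi_plus (z : Z -> R) (m n : Z) : R := z n * prodZ (Sz z) m n.
Definition phi_minus (z : Z -> R) (m n : Z) : R :=
  z n * prodZ (fun k => / Sz z k) m n.

(* Main.v *)
Require Import Defs.
From Stdlib Require Import Reals ZArith Lra Lia Psatz.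
Open Scope R_scope.

Lemma prod_nat_tele (g H : nat -> R) (k : nat) :
  (forall i, (i < k)%nat -> g i = H (S i) / H i) ->
  (forall i, (i <= k)%nat -> H i <> 0) ->
  prod_nat g k = H k / H 0%nat.
Proof.
  induction k as [|k IH]; intros Hg Hn; simpl.
  - field. apply Hn; lia.
  - rewrite IH; [| intros; apply Hg; lia | intros; apply Hn; lia].
    rewrite Hg by lia. field. split; apply Hn; lia.
Qed.

Lemma prodZ_tele (f h : Z -> R) (a b : Z) :
  (a <= b)%Z ->
  (forall j, (a < j <= b)%Z -> f j = h j / h (j - 1)%Z) ->
  (forall j, (a <= j <= b)%Z -> h j <> 0) ->
  prodZ f a b = h b / h a.
Proof.
  intros Hab Hf Hh. unfold prodZ.
  rewrite (prod_nat_tele _ (fun i => h (a + Z.of_nat i)%Z)).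
  - replace (a + Z.of_nat (Z.to_nat (b - a)))%Z with b by lia.
    replace (a + Z.of_nat 0)%Z with a by lia. reflexivity.
  - intros i Hi. rewrite Hf by lia.
    replace (a + 1 + Z.of_nat i - 1)%Z with (a + Z.of_nat i)%Z by lia.
    replace (a + 1 + Z.of_nat i)%Z with (a + Z.of_nat (S i))%Z by lia.
    reflexivity.
  - intros i Hi. apply Hh. lia.
Qed.

Lemma sqrt_wr (x y : R) : x - y = 1 -> 0 <= x -> 0 <= y ->
  sqrt (1 + 4 * x * y) = x + y.
Proof.
  intros H Hx Hy. replace (1 + 4 * x * y) with ((x + y) ^ 2).
  - apply sqrt_pow2. lra.
  - replace 1 with ((x - y) ^ 2) by (rewrite H; ring). ring.
Qed.

Theorem theorem8 (V psip psim : Z -> R) (m N : Z) :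
  (m + 2 <= N)%Z ->
  (forall n, (m < n < N)%Z -> schr V psip n = 0) ->
  (forall n, (m < n < N)%Z -> schr V psim n = 0) ->
  (forall n, (m <= n <= N)%Z -> 0 < psip n) ->
  (forall n, (m <= n <= N)%Z -> 0 < psim n) ->
  lin_indep_on m N psip psim ->
  (forall n, (m <= n < N)%Z ->
     psim n * psip (n + 1)%Z - psim (n + 1)%Z * psip n = 1) ->
  let G := green psip psim in
  let z := zseq psip psim in
  let S := Sz z in
  let phip := phi_plus z m in
  let phim := phi_minus z m in
  ((forall n, (m < n < N)%Z -> schr V phip n = 0 /\ schr V phim n = 0) /\
   lin_indep_on m N phip phim) /\
  (forall n k, (m < k < n)%Z -> (n <= N)%Z ->
     G n k = z n * z k * prodZ (fun l => / S l) k n) /\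
  (forall n, (m < n < N)%Z ->
     / 2 * (sqrt (1 + 4 * G n n * G (n + 1)%Z (n + 1)%Z)
            + sqrt (1 + 4 * G n n * G (n - 1)%Z (n - 1)%Z))
     = (2 + V n) * G n n).
Proof.
  intros HN Sa Sb Pa Pb Ind W G z S phip phim.
  assert (Gd : forall n, G n n = psip n * psim n).
  { intro n. unfold G, green. rewrite Z.min_id, Z.max_id. reflexivity. }
  assert (Zp : forall n, (m <= n <= N)%Z -> 0 < z n).
  { intros n Hn. unfold z, zseq. apply sqrt_lt_R0. fold G. rewrite Gd.
    apply Rmult_lt_0_compat; auto. }
  assert (Z2 : forall n, (m <= n <= N)%Z -> z n * z n = psip n * psim n).
  { intros n Hn. unfold z, zseq. rewrite sqrt_sqrt. fold G. apply Gd.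
    fold G. rewrite Gd. left; apply Rmult_lt_0_compat; auto. }
  assert (SK : forall n, (m < n <= N)%Z ->
     S n = psim (n-1)%Z * psip n / (z n * z (n-1)%Z)).
  { intros n Hn. unfold S, Sz.
    assert (Wn := W (n-1)%Z ltac:(lia)). replace (n - 1 + 1)%Z with n in Wn by lia.
    replace (1 + 4 * z n ^ 2 * z (n - 1)%Z ^ 2) with
      (1 + 4 * (psim (n-1)%Z * psip n) * (psim n * psip (n-1)%Z)).
    2:{ simpl. rewrite !Rmult_1_r, Z2, Z2 by lia. ring. }
    rewrite sqrt_wr; auto.
    2,3: left; apply Rmult_lt_0_compat; [apply Pb|apply Pa]; lia.
    assert (0 < z n) by (apply Zp; lia). assert (0 < z (n-1)%Z) by (apply Zp; lia).
    replace (1 + (psim (n - 1)%Z * psip n + psim n * psip (n - 1)%Z)) with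
      (2 * (psim (n - 1)%Z * psip n)) by lra.
    field. lra. }
  assert (PP : forall n, (m <= n <= N)%Z -> phip n = z m / psip m * psip n).
  { intros n Hn. unfold phip, phi_plus.
    rewrite (prodZ_tele _ (fun j => psip j / z j)); try lia.
    - assert (0 < z n) by (apply Zp; lia). assert (0 < z m) by (apply Zp; lia).
      assert (0 < psip m) by (apply Pa; lia). field. lra.
    - intros j Hj. rewrite SK by lia.
      assert (0 < z j) by (apply Zp; lia). assert (0 < z (j-1)%Z) by (apply Zp; lia).
      assert (0 < psip (j-1)%Z) by (apply Pa; lia).
      assert (E := Z2 (j-1)%Z ltac:(lia)).
      replace (psim (j-1)%Z) with (z (j-1)%Z * z (j-1)%Z / psip (j-1)%Z) by (rewrite E; field; lra). field. lra.
    - intros j Hj. assert (0 < z j) by (apply Zp; lia).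
      assert (0 < psip j) by (apply Pa; lia).
      apply Rgt_not_eq. apply Rdiv_lt_0_compat; lra. }
  assert (TM : forall k n, (m <= k <= n)%Z -> (n <= N)%Z ->
     prodZ (fun l => / S l) k n = (psim n / z n) / (psim k / z k)).
  { intros k n Hk Hn. apply (prodZ_tele _ (fun j => psim j / z j)); try lia.
    - intros j Hj. rewrite SK by lia.
      assert (0 < z j) by (apply Zp; lia). assert (0 < z (j-1)%Z) by (apply Zp; lia).
      assert (0 < psip j) by (apply Pa; lia).
      assert (0 < psim (j-1)%Z) by (apply Pb; lia).
      assert (E := Z2 j ltac:(lia)).
      replace (psim j) with (z j * z j / psip j) by (rewrite E; field; lra). field. lra.
    - intros j Hj. assert (0 < z j) by (apply Zp; lia).
      assert (0 < psim j) by (apply Pb; lia).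
      apply Rgt_not_eq. apply Rdiv_lt_0_compat; lra. }
  assert (PM : forall n, (m <= n <= N)%Z -> phim n = z m / psim m * psim n).
  { intros n Hn. unfold phim, phi_minus. fold S. rewrite TM by lia.
    assert (0 < z n) by (apply Zp; lia). assert (0 < z m) by (apply Zp; lia).
    assert (0 < psim m) by (apply Pb; lia). field. lra. }
  assert (Hzm : 0 < z m) by (apply Zp; lia).
  assert (Ham : 0 < psip m) by (apply Pa; lia).
  assert (Hbm : 0 < psim m) by (apply Pb; lia).
  split; [split|split].
  - intros n Hn. unfold schr.
    rewrite !PP, !PM by lia.
    assert (E1 := Sa n Hn). assert (E2 := Sb n Hn). unfold schr in E1, E2.
    split.
    + replace (- (z m / psip m * psip (n + 1)%Z) - z m / psip m * psip (n - 1)%Z +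
        (2 + V n) * (z m / psip m * psip n)) with
        (z m / psip m * (- psip (n + 1)%Z - psip (n - 1)%Z + (2 + V n) * psip n)) by ring.
      rewrite E1. ring.
    + replace (- (z m / psim m * psim (n + 1)%Z) - z m / psim m * psim (n - 1)%Z +
        (2 + V n) * (z m / psim m * psim n)) with
        (z m / psim m * (- psim (n + 1)%Z - psim (n - 1)%Z + (2 + V n) * psim n)) by ring.
      rewrite E2. ring.
  - intros a b Hab.
    destruct (Ind (a * (z m / psip m)) (b * (z m / psim m))) as [E1 E2].
    { intros n Hn. rewrite <- (Hab n Hn). rewrite PP, PM by lia. ring. }
    assert (0 < z m / psip m) by (apply Rdiv_lt_0_compat; lra).
    assert (0 < z m / psim m) by (apply Rdiv_lt_0_compat; lra).
    split; nra.
  - intros n k Hk Hn. rewrite TM by lia.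
    unfold G, green. rewrite Z.min_r, Z.max_l by lia.
    assert (0 < z n) by (apply Zp; lia). assert (0 < z k) by (apply Zp; lia).
    assert (0 < psim k) by (apply Pb; lia).
    assert (E := Z2 k ltac:(lia)).
    replace (psip k) with (z k * z k / psim k) by (rewrite E; field; lra). field. lra.
  - intros n Hn. rewrite !Gd.
    assert (W1 := W n ltac:(lia)). assert (W2 := W (n-1)%Z ltac:(lia)).
    replace (n - 1 + 1)%Z with n in W2 by lia.
    replace (1 + 4 * (psip n * psim n) * (psip (n + 1)%Z * psim (n + 1)%Z)) with
      (1 + 4 * (psim n * psip (n+1)%Z) * (psim (n+1)%Z * psip n)) by ring.
    replace (1 + 4 * (psip n * psim n) * (psip (n - 1)%Z * psim (n - 1)%Z)) with
      (1 + 4 * (psim (n-1)%Z * psip n) * (psim n * psip (n-1)%Z)) by ring.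
    rewrite !sqrt_wr; auto.
    2-5: left; apply Rmult_lt_0_compat; first [apply Pb; lia | apply Pa; lia].
    assert (E1 := Sa n Hn). assert (E2 := Sb n Hn). unfold schr in E1, E2.
    nra.
Qed.
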